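(* Let ${\bm X}$ be a finite set with a pseudometric $d_{\bm X}$, let $C(x,x')=d_{\bm X}(x,x')$, and let $m^{\bm X}_\bullet$ be an irreducible and aperiodic Markov transition kernel on ${\bm X}$. Then for any $\nu_1,\nu_2\in\mathcal{P}({\bm X})$, $$\lim_{k\to\infty}d^{(k)}_{\mathrm{WL}}\big(({\bm X},m^{\bm X}_\bullet,\nu_1),({\bm X},m^{\bm X}_\bullet,\nu_2);C\big)=0.$$
   Context: $\mathcal{C}(\alpha,\beta)$ denotes the set of couplings. For finite Markov chains $\mathcal{X}=({\bm X},m^{\bm X}_\bullet,\nu^{\bm X})$, $\mathcal{Y}=({\bm Y},m^{\bm Y}_\bullet,\nu^{\bm Y})$, a Markovian coupling is a (possibly time-inhomogeneous) Markov chain $(X_t,Y_t)_{t\in\mathbb{N}}$ on ${\bm X}\times{\bm Y}$ with $\mathrm{law}(X_0,Y_0)\in\mathcal{C}(\nu^{\bm X},\nu^{\bm Y})$ and, for all $t,x,y$, the conditional law of $(X_{t+1},Y_{t+1})$ given $(X_t,Y_t)=(x,y)$ in $\mathcal{C}(m^{\bm X}_x,m^{\bm Y}_y)$. $d^{(k)}_{\mathrm{WL}}(\mathcal{X},\mathcal{Y};C)=\inf\mathbb{E}\,C(X_k,Y_k)$ over all Markovian couplings. *)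

(* Defs.v *)
From HB Require Import structures.
From mathcomp Require Import all_boot all_order all_algebra.
From mathcomp Require Import all_classical all_reals all_analysis.
Set Implicit Arguments. Unset Strict Implicit. Unset Printing Implicit Defensive.
Import Order.TTheory GRing.Theory Num.Theory.
Local Open Scope ring_scope.
Local Open Scope classical_set_scope.

Section WL.
Variable R : realType.

Definition is_prob (T : finType) (mu : T -> R) : Prop :=
  (forall x, 0 <= mu x) /\ \sum_(x : T) mu x = 1.

Definition is_markov_kernel (T : finType) (m : T -> T -> R) : Prop :=
  forall x, is_prob (m x).

Definition is_pseudometric (T : finType) (d : T -> T -> R) : Prop :=
  (forall x, d x x = 0) /\ (forall x y, d x y = d y x) /\
  (forall x y z, d x z <= d x y + d y z).

Fixpoint kpow (T : finType) (m : T -> T -> R) (n : nat) : T -> T -> R :=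
  match n with
  | 0 => fun x y => (x == y)%:R
  | n'.+1 => fun x y => \sum_(z : T) kpow m n' x z * m z y
  end.

Definition irreducible (T : finType) (m : T -> T -> R) : Prop :=
  forall x y : T, exists n : nat, 0 < kpow m n x y.

Definition aperiodic (T : finType) (m : T -> T -> R) : Prop :=
  forall x : T, forall d : nat,
    (forall n : nat, (0 < n)%N -> 0 < kpow m n x x -> (d %| n)%N) -> d = 1%N.

Definition is_coupling (A B : finType) (alpha : A -> R) (beta : B -> R)
  (pi : A * B -> R) : Prop :=
  (forall z, 0 <= pi z) /\
  (forall a, \sum_(b : B) pi (a, b) = alpha a) /\
  (forall b, \sum_(a : A) pi (a, b) = beta b).

(* A Markovian coupling is given by the initial law pi0 of (X_0,Y_0) and the
   (time-dependent) transition kernels P t (x,y) of (X_{t+1},Y_{t+1}). *)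
Definition is_markovian_coupling (X Y : finType)
  (mX : X -> X -> R) (nuX : X -> R) (mY : Y -> Y -> R) (nuY : Y -> R)
  (pi0 : X * Y -> R) (P : nat -> X * Y -> X * Y -> R) : Prop :=
  is_coupling nuX nuY pi0 /\
  forall t (x : X) (y : Y), is_coupling (mX x) (mY y) (P t (x, y)).

Fixpoint coupling_law (X Y : finType) (pi0 : X * Y -> R)
  (P : nat -> X * Y -> X * Y -> R) (k : nat) : X * Y -> R :=
  match k with
  | 0 => pi0
  | k'.+1 => fun w => \sum_(z : X * Y) coupling_law pi0 P k' z * P k' z w
  end.

Definition expected_cost (X Y : finType) (pi0 : X * Y -> R)
  (P : nat -> X * Y -> X * Y -> R) (k : nat) (C : X -> Y -> R) : R :=
  \sum_(z : X * Y) coupling_law pi0 P k z * C z.1 z.2.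

Definition dWL (k : nat) (X Y : finType)
  (mX : X -> X -> R) (nuX : X -> R) (mY : Y -> Y -> R) (nuY : Y -> R)
  (C : X -> Y -> R) : R :=
  inf [set r : R | exists pi0 P,
         is_markovian_coupling mX nuX mY nuY pi0 P /\
         r = expected_cost pi0 P k C].

End WL.

(* Main.v *)
Require Import Defs.
From HB Require Import structures.
From mathcomp Require Import all_boot all_order all_algebra.
From mathcomp Require Import all_classical all_reals all_analysis.
From mathcomp Require Import lra ring zify.

Section Consec.
Variable S : nat -> Prop.
Hypothesis Sadd : forall a b, S a -> S b -> S (a + b).
Hypothesis Spos : forall n, S n -> 0 < n.
Hypothesis Sgcd : forall d, (forall n, S n -> d %| n) -> d = 1.

Lemma Smul k a : S a -> S (k.+1 * a).
Proof. move=> Ha; elim: k => [|k IH]; first by rewrite mul1n. by rewrite mulSn; apply: Sadd. Qed.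

Lemma consec_ind dl : forall dl', dl' <= dl -> 0 < dl' -> (exists a, S a /\ S (a + dl')) ->
  exists n, S n /\ S n.+1.
Proof.
elim: dl => [|dl IH] dl' Hle Hpos [a [Ha Hb]]; first by lia.
have [Heq|Hne1] := eqVneq dl' 1; first by subst; exists a; rewrite addn1 in Hb.
have : ~ (forall n, S n -> dl' %| n) by move=> H; move: (Sgcd dl' H) => E; rewrite E in Hne1.
move=> /existsNP [c /not_implyP [Hc Hndvd]].
have Hr : 0 < c %% dl'.
  by rewrite lt0n; apply/negP => /eqP H; by apply: Hndvd; rewrite /dvdn H.
have Hrl : c %% dl' < dl' by rewrite ltn_mod.
set q := c %/ dl'; set r := c %% dl'.
have Hc' : c = q * dl' + r by rewrite /q /r -divn_eq.
apply: (IH (dl' - r)); [lia|lia|].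
exists (q.+1 * a + c); split; first by apply: Sadd => //; apply: Smul.
have -> : q.+1 * a + c + (dl' - r) = q.+1 * (a + dl') by rewrite Hc' mulnDr mulSn; lia.
exact: Smul.
Qed.

Lemma consec : exists n, S n /\ S n.+1.
Proof.
have [a Ha] : exists a, S a.
  apply/not_existsP => H; have := Sgcd 0 (fun n Hn => False_ind _ (H n Hn)); done.
apply: (@consec_ind a a) => //; first exact: Spos.
by exists a; split => //; apply: Sadd.
Qed.
End Consec.

Set Implicit Arguments. Unset Strict Implicit. Unset Printing Implicit Defensive.
Import Order.TTheory GRing.Theory Num.Theory.
Import numFieldNormedType.Exports.
Local Open Scope ring_scope.
Local Open Scope classical_set_scope.

Section Kpow.
Variables (R : realType) (X : finType) (m : X -> X -> R).
Hypothesis mK : is_markov_kernel m.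

Lemma kpow_add a b x y :
  kpow m (a + b) x y = \sum_z kpow m a x z * kpow m b z y.
Proof.
elim: b x y => [|b IH] x y /=.
  rewrite addn0 (bigD1 y) //= eqxx mulr1 big1 ?addr0 // => z /negbTE.
  by rewrite eq_sym => ->; rewrite mulr0.
rewrite addnS /=.
under eq_bigr => w _ do rewrite IH big_distrl /=.
rewrite exchange_big /=; apply: eq_bigr => z _.
by rewrite big_distrr /=; apply: eq_bigr => w _; rewrite mulrA.
Qed.

Lemma kpow_ge0 n x y : 0 <= kpow m n x y.
Proof.
elim: n x y => [|n IH] x y /=; first by rewrite ler0n.
by apply: sumr_ge0 => z _; apply: mulr_ge0 => //; case: (mK z).
Qed.

Lemma kpow_sum1 n x : \sum_y kpow m n x y = 1.
Proof.
elim: n x => [|n IH] x /=.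
  rewrite (bigD1 x) //= eqxx big1 ?addr0 // => z /negbTE.
  by rewrite eq_sym => ->.
rewrite exchange_big /=. rewrite -(IH x); apply: eq_bigr => z _.
by rewrite -big_distrr /=; case: (mK z) => _ ->; rewrite mulr1.
Qed.

Lemma kpow_le1 n x y : kpow m n x y <= 1.
Proof.
rewrite -(kpow_sum1 n x) (bigD1 y) //= lerDl.
by apply: sumr_ge0 => z _; apply: kpow_ge0.
Qed.

Lemma kpow1 x y : kpow m 1 x y = m x y.
Proof.
rewrite /= (bigD1 x) //= eqxx mul1r big1 ?addr0 // => z /negbTE.
by rewrite eq_sym => ->; rewrite mul0r.
Qed.

Lemma kpowS' n x y : kpow m n.+1 x y = \sum_z m x z * kpow m n z y.
Proof.
rewrite -add1n kpow_add; apply: eq_bigr => z _; by rewrite kpow1.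
Qed.

Lemma kpow_add_pos a b x y z : 0 < kpow m a x z -> 0 < kpow m b z y ->
  0 < kpow m (a + b) x y.
Proof.
move=> h1 h2; rewrite kpow_add (bigD1 z) //=.
apply: (lt_le_trans (mulr_gt0 h1 h2)); rewrite lerDl.
by apply: sumr_ge0 => w _; apply: mulr_ge0; apply: kpow_ge0.
Qed.

End Kpow.

Lemma sum_pair (R : realType) (X Y : finType) (F : X * Y -> R) :
  \sum_w F w = \sum_a \sum_b F (a, b).
Proof. by rewrite pair_bigA; apply: eq_bigr; case. Qed.

Section Coup.
Variables (R : realType) (X : finType) (m : X -> X -> R).
Hypothesis mK : is_markov_kernel m.

Definition Pc (z w : X * X) : R :=
  if z.1 == z.2 then m z.1 w.1 * (w.1 == w.2)%:R else m z.1 w.1 * m z.2 w.2.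

Fixpoint hc (n : nat) (z : X * X) : R :=
  match n with
  | 0 => (z.1 == z.2)%:R
  | n'.+1 => \sum_w Pc z w * hc n' w
  end.

Lemma m_ge0 x y : 0 <= m x y. Proof. by case: (mK x). Qed.
Lemma m_sum1 x : \sum_y m x y = 1. Proof. by case: (mK x). Qed.

Lemma Pc_ge0 z w : 0 <= Pc z w.
Proof. by rewrite /Pc; case: ifP => _; apply: mulr_ge0; rewrite ?m_ge0 ?ler0n. Qed.

Lemma sum_diag (F : X -> X -> R) x :
  \sum_b F x b * (x == b)%:R = F x x.
Proof.
rewrite (bigD1 x) //= eqxx mulr1 big1 ?addr0 // => b /negbTE.
by rewrite eq_sym => ->; rewrite mulr0.
Qed.

Lemma Pc_coupling x y : is_coupling (m x) (m y) (Pc (x, y)).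
Proof.
split; first by move=> w; apply: Pc_ge0.
split.
  move=> a; rewrite /Pc /=; case: eqP => [_|_].
    exact: (sum_diag (fun a b => m x a)).
  by rewrite -big_distrr /= m_sum1 mulr1.
move=> b; rewrite /Pc /=; case: eqP => [<-|_].
  under eq_bigr => a _ do rewrite eq_sym.
  exact: (sum_diag (fun b a => m x a)).
by rewrite -big_distrl /= m_sum1 mul1r.
Qed.

Lemma Pc_sum1 z : \sum_w Pc z w = 1.
Proof.
case: z => x y; rewrite sum_pair.
have [_ [H _]] := Pc_coupling x y.
by under eq_bigr => a _ do rewrite H; rewrite m_sum1.
Qed.

Lemma hc_diag n x : hc n (x, x) = 1.
Proof.
elim: n x => [|n IH] x /=; first by rewrite eqxx.
rewrite sum_pair /Pc /= eqxx.
under eq_bigr => a _ do under eq_bigr => b _ do rewrite mulrAC.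
under eq_bigr => a _ do rewrite (sum_diag (fun a b => m x a * hc n (a, b)) a) IH mulr1.
by rewrite m_sum1.
Qed.

Lemma hc_ge0 n z : 0 <= hc n z.
Proof.
elim: n z => [|n IH] z /=; first by rewrite ler0n.
by apply: sumr_ge0 => w _; apply: mulr_ge0; rewrite ?Pc_ge0 ?IH.
Qed.

Lemma hc_le1 n z : hc n z <= 1.
Proof.
elim: n z => [|n IH] z /=; first by rewrite lern1 leq_b1.
rewrite -(Pc_sum1 z); apply: ler_sum => w _.
by rewrite -{2}(mulr1 (Pc z w)); apply: ler_wpM2l; rewrite ?Pc_ge0 ?IH.
Qed.

Lemma hc_mono n z : hc n z <= hc n.+1 z.
Proof.
elim: n z => [|n IH] z.
  case: z => x y; have [<-|/negbTE H] := eqVneq x y; first by rewrite !hc_diag.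
  by rewrite /= H; apply: hc_ge0 1%N (x, y).
rewrite [hc n.+2 z]/= [hc n.+1 z]/=; apply: ler_sum => w _.
by apply: ler_wpM2l; rewrite ?Pc_ge0 ?IH.
Qed.

Lemma hc_monoD n j z : hc n z <= hc (n + j) z.
Proof.
elim: j => [|j IH]; first by rewrite addn0.
by apply: (le_trans IH); rewrite addnS; apply: hc_mono.
Qed.

Lemma hc_lb n z : \sum_u kpow m n z.1 u * kpow m n z.2 u <= hc n z.
Proof.
elim: n z => [|n IH] [x y].
  have [<-|/negbTE H] := eqVneq x y.
    by rewrite hc_diag /= (sum_diag (fun x u => (x == u)%:R) x) eqxx.
  rewrite /= H big1 // => u _; case: (x =P u) => [<-|_]; rewrite ?mul0r // eq_sym H mulr0 //.
have [<-|/negbTE H] := eqVneq x y.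
  rewrite hc_diag -(kpow_sum1 mK n.+1 x); apply: ler_sum => u _.
  by rewrite -[X in _ <= X]mulr1; apply: ler_wpM2l; rewrite ?kpow_ge0 ?kpow_le1.
under eq_bigr => u _ do rewrite !kpowS'.
rewrite [hc _ _]/= /Pc /= H.
apply: (@le_trans _ _ (\sum_w m x w.1 * m y w.2 *
    \sum_u kpow m n w.1 u * kpow m n w.2 u)); last first.
  apply: ler_sum => w _; apply: ler_wpM2l; rewrite ?IH //.
  by apply: mulr_ge0; apply: m_ge0.
rewrite le_eqVlt; apply/orP; left; apply/eqP.
under eq_bigr => u _ do rewrite big_distrl /=.
under eq_bigr => u _ do under eq_bigr => a _ do rewrite big_distrr /=.
rewrite sum_pair exchange_big /=; apply: eq_bigr => a _.
rewrite exchange_big /=; apply: eq_bigr => b _.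
rewrite big_distrr /=; apply: eq_bigr => u _; rewrite /=.
by rewrite mulrA mulrA -(mulrA (m x a)) (mulrC (kpow m n a u)) !mulrA.
Qed.

End Coup.

Lemma law_ge0 (R : realType) (X Y : finType) (pi0 : X * Y -> R) P k z :
  (forall z, 0 <= pi0 z) -> (forall t z w, 0 <= P t z w) ->
  0 <= coupling_law pi0 P k z.
Proof.
move=> H0 HP; elim: k z => [|k IH] z //=.
by apply: sumr_ge0 => w _; apply: mulr_ge0.
Qed.

Section Law.
Variables (R : realType) (X : finType) (m : X -> X -> R) (pi0 : X * X -> R).
Hypothesis mK : is_markov_kernel m.
Hypothesis pi0_ge0 : forall z, 0 <= pi0 z.
Hypothesis pi0_sum : \sum_z pi0 z = 1.

Definition lw k := coupling_law pi0 (fun _ => Pc m) k.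

Lemma lw_ge0 k z : 0 <= lw k z.
Proof. by apply: law_ge0 => // t z' w; apply: Pc_ge0. Qed.

Lemma lw_sum1 k : \sum_z lw k z = 1.
Proof.
elim: k => [|k IH] //; rewrite /lw /= exchange_big /= -IH; apply: eq_bigr => z _.
by rewrite -big_distrr /= Pc_sum1 // mulr1.
Qed.

Lemma lw_h n k : \sum_w lw (k + n) w * hc m 0 w = \sum_z lw k z * hc m n z.
Proof.
elim: n k => [|n IH] k; first by rewrite addn0.
rewrite addnS -addSn IH /lw /=.
under eq_bigr => z _ do rewrite big_distrl /=.
rewrite exchange_big /=; apply: eq_bigr => w _.
rewrite big_distrr /=; apply: eq_bigr => z _; by rewrite mulrA.
Qed.

Definition Dg k := \sum_w lw k w * hc m 0 w.

Lemma Dg_ge0 k : 0 <= Dg k.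
Proof. by apply: sumr_ge0 => w _; apply: mulr_ge0; rewrite ?lw_ge0 ?hc_ge0. Qed.

Lemma Dg_le1 k : Dg k <= 1.
Proof.
rewrite -(lw_sum1 k); apply: ler_sum => w _.
by rewrite -[X in _ <= X]mulr1; apply: ler_wpM2l; rewrite ?lw_ge0 ?hc_le1.
Qed.

Lemma Dg_mono k j : Dg k <= Dg (k + j).
Proof.
elim: j => [|j IH]; first by rewrite addn0.
apply: (le_trans IH); rewrite /Dg addnS -addn1 (lw_h 1); apply: ler_sum => w _.
by apply: ler_wpM2l; rewrite ?lw_ge0 ?hc_mono.
Qed.

Lemma Dg_N N eps k : (forall z, hc m 0 z + eps * (1 - hc m 0 z) <= hc m N z) ->
  1 - Dg (k + N) <= (1 - eps) * (1 - Dg k).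
Proof.
move=> H.
have : \sum_z lw k z * (hc m 0 z + eps * (1 - hc m 0 z)) <= Dg (k + N).
  rewrite /Dg lw_h; apply: ler_sum => z _; apply: ler_wpM2l; rewrite ?lw_ge0 ?H //.
have -> : \sum_z lw k z * (hc m 0 z + eps * (1 - hc m 0 z)) =
   Dg k + eps * (1 - Dg k).
  rewrite /Dg; under eq_bigr => z _ do rewrite mulrDr mulrCA mulrBr mulr1.
  by rewrite big_split /= -mulr_sumr sumrB lw_sum1.
move=> Hle; rewrite mulrBl mul1r; lra.
Qed.

End Law.

Theorem lemma25 (R : realType) (X : finType) (d : X -> X -> R)
  (m : X -> X -> R) (nu1 nu2 : X -> R) :
  is_pseudometric d ->
  is_markov_kernel m -> irreducible m -> aperiodic m ->
  is_prob nu1 -> is_prob nu2 ->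
  (fun k : nat => dWL k m nu1 m nu2 d) @ \oo --> (0:R)%R.
Proof.
move=> [d0 [dsym dtri]] mK irr aper [nu1ge nu1s] [nu2ge nu2s].
pose pi0 := fun z : X * X => nu1 z.1 * nu2 z.2.
have pi0_ge0 : forall z, 0 <= pi0 z by move=> z; apply: mulr_ge0.
have pi0_coup : is_coupling nu1 nu2 pi0.
  split=> //; split.
    by move=> a; rewrite /pi0 /= -big_distrr /= nu2s mulr1.
  by move=> b; rewrite /pi0 /= -big_distrl /= nu1s mul1r.
have pi0_sum : \sum_z pi0 z = 1.
  by rewrite sum_pair; under eq_bigr => a _ do rewrite (pi0_coup.2.1 a).
have d_ge0 : forall x y, 0 <= d x y.
  by move=> x y; have := dtri x y x; rewrite d0 (dsym y x); lra.
have hpos : forall z, exists n, 0 < hc m n z.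
  move=> [x y].
  pose S := fun n => (0 < n)%N /\ 0 < kpow m n x x.
  have Sadd : forall a b, S a -> S b -> S (a + b)%N.
    move=> a b [ha ka] [hb kb]; split; first by rewrite addn_gt0 ha.
    exact: (kpow_add_pos mK ka kb).
  have Spos : forall n, S n -> (0 < n)%N by move=> n [].
  have Sgcd : forall dd, (forall n, S n -> (dd %| n)%N) -> dd = 1%N.
    by move=> dd H; apply: (aper x) => n hn kn; apply: H.
  have [n0 [[Hn0 Kn0] [Hn1 Kn1]]] := consec S Sadd Spos Sgcd.
  have mult : forall j k, 0 < kpow m j x x -> 0 < kpow m (k * j) x x.
    move=> j k Kj; elim: k => [|k IH]; first by rewrite mul0n /= eqxx ltr01.
    by rewrite mulSnr; apply: (kpow_add_pos mK IH Kj).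
  have [a Ha] := irr y x.
  exists (a * n0.+1)%N.
  apply: (lt_le_trans _ (hc_lb mK _ (x, y))).
  rewrite (bigD1 x) //=.
  apply: (@lt_le_trans _ _ (kpow m (a * n0.+1) x x * kpow m (a * n0.+1) y x)).
    apply: mulr_gt0; first exact: mult.
    by rewrite mulnSr addnC; apply: (kpow_add_pos mK Ha (mult _ _ Kn0)).
  rewrite lerDl; apply: sumr_ge0 => u _; apply: mulr_ge0; exact: kpow_ge0.
have [f Hf] := choice hpos.
pose N := (\sum_z f z).+1.
have hN : forall z, 0 < hc m N z.
  move=> z; apply: (lt_le_trans (Hf z)).
  have -> : N = (f z + (N - f z))%N.
    by rewrite subnKC //; apply: leqW; rewrite (bigD1 z) //= leq_addr.
  exact: hc_monoD mK _ _ z.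
pose s := \sum_z (hc m N z)^-1.
have s_ge0 : 0 <= s by apply: sumr_ge0 => z _; rewrite invr_ge0; apply: ltW; apply: hN.
pose eps := (1 + s)^-1.
have eps_gt0 : 0 < eps by rewrite invr_gt0; lra.
have eps_le : forall z, eps <= hc m N z.
  move=> z; rewrite -[X in _ <= X](invrK (hc m N z)) lef_pV2 ?posrE ?invr_gt0 //; last by lra.
  have : (hc m N z)^-1 <= s.
    rewrite /s (bigD1 z) //= lerDl; apply: sumr_ge0 => w _; rewrite invr_ge0; apply: ltW; apply: hN.
  lra.
have eps_le1 : eps <= 1.
  by rewrite -[X in _ <= X]invr1 lef_pV2 ?posrE //; lra.
have Hcond : forall z, hc m 0 z + eps * (1 - hc m 0 z) <= hc m N z.
  move=> [x y]; case: (x =P y) => [<-|/eqP ne].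
    by rewrite !(hc_diag mK) subrr mulr0 addr0.
  by rewrite /= (negbTE ne) subr0 mulr1 add0r; apply: eps_le.
have Ob : forall j, 1 - Dg m pi0 (j * N) <= (1 - eps) ^+ j.
  elim=> [|j IH].
    by rewrite mul0n expr0; have := Dg_ge0 mK pi0_ge0 0; lra.
  rewrite mulSnr exprS.
  apply: (le_trans (Dg_N mK pi0_ge0 pi0_sum (j * N) Hcond)).
  by apply: ler_wpM2l => //; lra.
have Omono : forall j k, (j <= k)%N -> 1 - Dg m pi0 k <= 1 - Dg m pi0 j.
  move=> j k jk; rewrite -(subnKC jk).
  have := Dg_mono mK pi0_ge0 j (k - j); lra.
pose M := \sum_z d z.1 z.2.
have M_ge0 : 0 <= M by apply: sumr_ge0 => z _; apply: d_ge0.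
have costle : forall k, expected_cost pi0 (fun _ => Pc m) k d <= M * (1 - Dg m pi0 k).
  move=> k.
  have -> : M * (1 - Dg m pi0 k) = \sum_z lw m pi0 k z * (M * (1 - hc m 0 z)).
    rewrite /Dg -{1}(lw_sum1 mK pi0_sum k) -sumrB mulr_sumr; apply: eq_bigr => z _.
    ring.
  apply: ler_sum => z _; apply: ler_wpM2l; first exact: lw_ge0.
  case: z => x y /=; case: (x =P y) => [<-|/eqP ne].
    by rewrite d0 subrr mulr0.
  rewrite subr0 mulr1 /M (bigD1 (x, y)) //= lerDl.
  by apply: sumr_ge0 => z _; apply: d_ge0.
have dWL_bnd : forall k, 0 <= dWL k m nu1 m nu2 d /\
    dWL k m nu1 m nu2 d <= expected_cost pi0 (fun _ => Pc m) k d.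
  move=> k.
  set E := [set r : R | exists pi0 P, is_markovian_coupling m nu1 m nu2 pi0 P /\
         r = expected_cost pi0 P k d].
  have Ein : E (expected_cost pi0 (fun _ => Pc m) k d).
    exists pi0, (fun _ => Pc m); split => //; split => // t x y; exact: Pc_coupling.
  have Elb : lbound E 0.
    move=> r [p0 [Pp [[[p0ge _] Pcoup] ->]]].
    apply: sumr_ge0 => z _; apply: mulr_ge0; last exact: d_ge0.
    apply: law_ge0 => // t [x y] w; exact: (Pcoup t x y).1.
  split; first by apply: lb_le_inf => //; exists (expected_cost pi0 (fun _ => Pc m) k d).
  by apply: ge_inf => //; exists 0.
apply/cvgrPdist_le => e epos.
pose q := 1 - eps.
have q_ge0 : 0 <= q by rewrite /q; lra.
have qlt1 : `|q| < 1 by rewrite ger0_norm // /q; lra.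
have e'pos : 0 < e / (M + 1) by apply: divr_gt0 => //; lra.
have := cvg_expr qlt1 => /cvgr0Pnorm_lt /(_ _ e'pos) [j0 _ Hj0].
have Hq : q ^+ j0 < e / (M + 1).
  by have := Hj0 j0 (leqnn j0); rewrite /= ger0_norm // exprn_ge0.
exists (j0 * N)%N => // k /= Hk.
have [b1 b2] := dWL_bnd k.
rewrite sub0r normrN ger0_norm //.
apply: (le_trans b2); apply: (le_trans (costle k)).
apply: (@le_trans _ _ (M * q ^+ j0)).
  by apply: ler_wpM2l => //; apply: (le_trans (Omono _ _ Hk)); apply: Ob.
have qj_ge0 : 0 <= q ^+ j0 by apply: exprn_ge0.
apply: (@le_trans _ _ ((M + 1) * q ^+ j0)).
  by apply: ler_wpM2r => //; lra.
have nz : M + 1 != 0 by rewrite gt_eqF //; lra.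
rewrite -[X in _ <= X](divfK nz e).
by rewrite mulrC; apply: ler_wpM2r; [lra | apply: ltW].
Qed.
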